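(* Let $(V,d,k,q)$ be an instance of the individually fair $k$-center with outliers problem (IF$k$CO) as defined in the context. Then the naive algorithm (Algorithm 1) described in the context outputs a feasible solution $(S,O,\sigma)$ for this instance, i.e. $|S|\le k$ and $|O|\le q$.
   Context: IF$k$CO instance: a finite set $V$ with $|V|=n$, a metric $d$ on $V$ (nonnegative, symmetric, $d_{ii}=0$, triangle inequality), and integers $k\ge1$ and $q\ge0$. A solution is $(S,O,\sigma)$ with $S\subseteq V$ (centers), $O\subseteq V$ (outliers), $\sigma:V\setminus O\to S$; it is feasible if $|S|\le k$ and $|O|\le q$. For $i\in V$, the neighborhood radius $NR(i)$ is the distance from $i$ to its $\lceil n/k\rceil$-th nearest neighbor in $V$, where $i$ counts as its own (first) nearest neighbor. Algorithm 1: set $P:=V$, $S:=\emptyset$. While $P\ne\emptyset$: pick $s\in P$ minimizing $NR(i)$ over $i\in P$; set $S:=S\cup\{s\}$ and $P:=\{i\in P: d_{is}>2\,NR(i)\}$. Then set $O:=\emptyset$ and, for each $i\in V$, let $\sigma(i)$ be a center $h\in S$ minimizing $d_{ih}$. Output $(S,O,\sigma)$. *)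

(* Defs.v *)
From HB Require Import structures.
From mathcomp Require Import all_boot all_order all_algebra.
Set Implicit Arguments. Unset Strict Implicit. Unset Printing Implicit Defensive.
Import Order.TTheory GRing.Theory Num.Theory.
Local Open Scope ring_scope.

Section IFkCO.
Variables (R : realDomainType) (V : finType) (d : V -> V -> R) (k : nat).

Definition is_metric : Prop :=
  [/\ forall i j, 0 <= d i j,
      forall i j, d i j = d j i,
      forall i, d i i = 0 &
      forall i j l, d i l <= d i j + d j l].

(* ceil(n/k) for k >= 1 *)
Definition ceil_div (n k : nat) : nat := ((n + k.-1) %/ k)%N.

(* NR(i): distance from i to its ceil(n/k)-th nearest neighbour in V
   (i itself, at distance d i i = 0, being the first), i.e. the
   ceil(n/k)-th smallest entry (counted with multiplicity) of the
   multiset of distances {d i j | j in V}. *)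
Definition NR (i : V) : R :=
  nth 0 (sort <=%R [seq d i j | j <- enum V]) (ceil_div #|V| k).-1.

(* One iteration of the while loop of Algorithm 1 on state (P, S). *)
Definition alg_step (st st' : {set V} * {set V}) : Prop :=
  let: (P, Sc) := st in
  exists2 s, s \in P &
    (forall i, i \in P -> NR s <= NR i) /\
    st' = ([set i in P | 2 * NR i < d i s], s |: Sc).

Inductive alg_reach : {set V} * {set V} -> {set V} * {set V} -> Prop :=
| reach_refl st : alg_reach st st
| reach_step st st' st'' :
    (st.1 != set0) -> alg_step st st' -> alg_reach st' st'' -> alg_reach st st''.

(* (S, O, sigma) is a possible output of Algorithm 1 (for any tie-breaking). *)
Definition alg1_output (Sc O : {set V}) (sigma : V -> V) : Prop :=
  [/\ alg_reach ([set: V], set0) (set0, Sc),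
      O = set0 &
      forall i, sigma i \in Sc /\ (forall h, h \in Sc -> d i (sigma i) <= d i h)].

Definition feasible (q : nat) (Sc O : {set V}) : Prop :=
  (#|Sc| <= k)%N /\ (#|O| <= q)%N.

End IFkCO.

(* Main.v *)
Require Import Defs.
From HB Require Import structures.
From mathcomp Require Import all_boot all_order all_algebra.
From mathcomp Require Import zify ring lra.
Import Order.TTheory GRing.Theory Num.Theory.
Local Open Scope ring_scope.

Lemma m_bounds n k : (1 <= k)%N -> (0 < n)%N -> (0 < (n + k.-1) %/ k)%N /\ ((n + k.-1) %/ k <= n)%N /\ (n <= (n + k.-1) %/ k * k)%N.
Proof.
move=> k1 h; split; first by rewrite divn_gt0 //; lia.
split; first by rewrite -ltnS ltn_divLR //; nia.
have := divn_eq (n + k.-1) k. have := ltn_pmod (n + k.-1) k1. lia.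
Qed.

Section Proofs.
Variables (R : realDomainType) (V : finType) (d : V -> V -> R) (k : nat).
Hypothesis dm : is_metric d.
Hypothesis k1 : (1 <= k)%N.

Lemma NR_ge0 i : 0 <= NR d k i.
Proof.
rewrite /NR; set s := sort _ _.
case: (ltnP (ceil_div #|V| k).-1 (size s)) => h; last by rewrite nth_default.
have : nth 0 s (ceil_div #|V| k).-1 \in s by apply: mem_nth.
rewrite mem_sort => /mapP [j _ ->]. by case: dm.
Qed.

Definition ball s := [set j | d s j <= NR d k s].

Lemma cnt (f : V -> R) (p : pred R) :
  #|[set j | p (f j)]| = count p [seq f j | j <- enum V].
Proof.
rewrite cardsE count_map cardE /enum_mem size_filter count_filter; apply: eq_count => x.
by rewrite /= andbT.
Qed.

Lemma ball_card s : (0 < #|V|)%N -> (ceil_div #|V| k <= #|ball s|)%N.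
Proof.
move=> /(m_bounds _ _ k1) [m0 [mn _]].
rewrite /ball (cnt (d s) (fun x => x <= NR d k s)).
rewrite -(permP (permEl (perm_sort <=%R _))).
rewrite /NR; set m := ceil_div _ _.
set L := sort _ _.
have sL : sorted <=%R L by apply: sort_sorted; exact: le_total.
have szL : size L = #|V| by rewrite size_sort size_map -cardE.
set N := nth 0 L m.-1.
have m0' : (0 < m)%N := m0. have mn' : (m <= #|V|)%N := mn.
clearbody m; clear m0 mn.
rewrite -(cat_take_drop m L) count_cat.
apply: leq_trans (leq_addr _ _).
have -> : count (fun x => x <= N) (take m L) = size (take m L).
  apply/eqP; rewrite -all_count; apply/(all_nthP 0) => i.
  rewrite size_takel ?szL // => him.
  rewrite nth_take //.
  apply: (le_sorted_leq_nth 0 sL); rewrite ?inE ?szL; lia.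
by rewrite size_takel ?szL.
Qed.

Definition Inv (st : {set V} * {set V}) :=
  let: (P, Sc) := st in
  (forall t i, t \in Sc -> i \in P -> NR d k t <= NR d k i /\ 2 * NR d k i < d i t) /\
  (#|Sc| * ceil_div #|V| k <= #|\bigcup_(t in Sc) ball t|)%N.

Lemma Inv_step st st' : Inv st -> alg_step d k st st' -> Inv st'.
Proof.
case: st => P Sc [H1 H2] [s sP [Hmin ->]].
have sSc : s \notin Sc.
  apply/negP => sSc; have [_ ] := H1 s s sSc sP.
  case: dm => _ _ -> _; have := NR_ge0 s; lra.
split.
  move=> t i; rewrite in_setU1 inE => /orP [/eqP -> | tSc] /andP [iP hi].
    by split => //; apply: Hmin.
  by apply: H1.
rewrite cardsU1 sSc big_setU1 //= cardsU.
have -> : ball s :&: \bigcup_(t in Sc) ball t = set0.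
  apply/setP => j; rewrite !inE; apply/negP => /andP [bj /bigcupP [t tSc]].
  rewrite ?inE => tj.
  have [h1 h2] := H1 t s tSc sP.
  move: bj; rewrite ?inE => bj.
  case: dm => _ sym _ tri.
  have := tri s j t; rewrite (sym j t); lra.
rewrite cards0 subn0 mulSn leq_add // ball_card //.
by apply/card_gt0P; exists s.
Qed.

Lemma Inv_reach st st' : alg_reach d k st st' -> Inv st -> Inv st'.
Proof.
elim => // st1 st2 st3 _ hs _ IH hi; apply: IH; exact: Inv_step hi hs.
Qed.

End Proofs.

Theorem lemma1 (R : realDomainType) (V : finType) (d : V -> V -> R)
  (k q : nat) (Sc O : {set V}) (sigma : V -> V) :
  is_metric d -> (1 <= k)%N ->
  alg1_output d k Sc O sigma ->
  feasible k q Sc O.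
Proof.
move=> dm k1 [hr -> _]; split; last by rewrite cards0.
have [_ h] : Inv _ _ d k (set0, Sc).
  apply: (@Inv_reach _ _ d k dm k1 _ _ hr); split; first by move=> t i; rewrite inE.
  by rewrite cards0.
have hV := leq_trans h (max_card _).
case: (posnP #|V|) => n0.
  by rewrite (leq_trans (max_card _)) // n0.
have [m0 [_ mk]] := m_bounds _ _ k1 n0.
rewrite -(leq_pmul2r m0); apply: leq_trans hV _; by rewrite mulnC.

Qed.
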